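(* Every locally stable commutative ring $R$ is strongly completable; that is, for every $n\geq 2$ and all $a_1,\dots,a_n,d\in R$ with $a_1R+\cdots+a_nR=dR$, there exists an $n\times n$ matrix $A$ over $R$ whose first row is $(a_1,\dots,a_n)$ and with $\det(A)=d$.
   Context: All rings are commutative with identity. A ring $R$ has stable range 1 if whenever $a,b\in R$ with $aR+bR=R$, there exists $y\in R$ such that $a+by$ is a unit. A ring $R$ is locally stable if whenever $a,b\in R$ with $aR+bR=R$, there exists $y\in R$ such that $R/(a+by)R$ has stable range 1. *)

(* Defs.v *)
From mathcomp Require Import all_boot all_algebra.
Set Implicit Arguments. Unset Strict Implicit. Unset Printing Implicit Defensive.
Import GRing.Theory.
Local Open Scope ring_scope.

Definition congr_mod (R : comUnitRingType) (c x y : R) : Prop :=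
  exists t : R, x - y = c * t.

(* The quotient ring R/cR has stable range 1, written out in R:
   whenever a,b satisfy aR + bR = R modulo cR (i.e. a*r + b*s = 1 mod c),
   there is y with a + b*y a unit modulo cR (i.e. (a+by)u = 1 mod c).
   Elements of R/cR are represented by elements of R. *)
Definition quot_stable_range1 (R : comUnitRingType) (c : R) : Prop :=
  forall a b : R,
    (exists r s : R, congr_mod c (a * r + b * s) 1) ->
    exists y u : R, congr_mod c ((a + b * y) * u) 1.

Definition stable_range1 (R : comUnitRingType) : Prop :=
  forall a b : R, (exists r s : R, a * r + b * s = 1) ->
    exists y : R, (a + b * y) \is a GRing.unit.

Definition locally_stable (R : comUnitRingType) : Prop :=
  forall a b : R, (exists r s : R, a * r + b * s = 1) ->
    exists y : R, quot_stable_range1 (a + b * y).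

Definition ideal_eq_principal (R : comUnitRingType) (n : nat)
    (a : 'I_n -> R) (d : R) : Prop :=
  forall x : R, (exists c : 'I_n -> R, x = \sum_(i < n) a i * c i)
                <-> (exists r : R, x = d * r).

Definition strongly_completable (R : comUnitRingType) : Prop :=
  forall (n : nat), (2 <= n)%N ->
  forall (a : 'I_n -> R) (d : R), ideal_eq_principal a d ->
    exists A : 'M[R]_n,
      (forall (i0 : 'I_n), nat_of_ord i0 = 0%N -> forall j : 'I_n, A i0 j = a j)
      /\ \det A = d.

(* Main.v *)
Require Import Defs.
From mathcomp Require Import all_boot all_algebra.
From mathcomp Require Import ring.
Set Implicit Arguments. Unset Strict Implicit. Unset Printing Implicit Defensive.
Import GRing.Theory.
Local Open Scope ring_scope.

Lemma det2 (R : comUnitRingType) (M : 'M[R]_2) :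
  \det M = M 0 0 * M 1 1 - M 0 1 * M 1 0.
Proof.
rewrite (expand_det_row _ 0) !big_ord_recl big_ord0 /cofactor !det_mx11 !mxE /=.
rewrite addr0 /= !expr0 !mul1r.
have e1 : lift (ord0 : 'I_2) (ord0 : 'I_1) = 1 by apply: val_inj.
have e0 : lift (1 : 'I_2) (ord0 : 'I_1) = 0 by apply: val_inj.
rewrite ?e1 ?e0.
rewrite /bump /= expr1; ring.
Qed.
Lemma core (R : comUnitRingType) : locally_stable R ->
  forall al be ga d c1 c2 : R,
  (exists a, al = d * a) -> (exists b, be = d * b) -> (exists g, ga = d * g) ->
  d = al * c1 + be * c2 + ga ->
  exists p q w r s : R, (al + be * p + ga * q) * r + (be + ga * w) * s = d.
Proof.
move=> LS al be ga d c1 c2 [a ->] [b ->] [g ->] hd.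
set e := 1 - a * c1 - b * c2 - g.
have de : d * e = 0.
  have -> : d * e = d - (d * a * c1 + d * b * c2 + d * g) by rewrite /e; ring.
  by rewrite -hd subrr.
have [y Hy] : exists y, quot_stable_range1 (a + (b * c2 + g + e) * y).
  apply: LS; exists c1, 1; rewrite /e; ring.
set c := a + (b * c2 + g + e) * y in Hy.
have [z [v [t Ht]]] : exists z v, congr_mod c ((b + (g + e) * z) * v) 1.
  apply: Hy; exists (c2 * (1 - y * c1)), (1 - y * c1); exists (- c1).
  rewrite /c /e; ring.
exists (c2 * y), y, z, (- t), v.
have dc : d * a + d * b * (c2 * y) + d * g * y = d * c.
  rewrite /c; have -> : d * (a + (b * c2 + g + e) * y) = d * a + d * b * (c2 * y) + d * g * y + (d * e) * y by ring.
  by rewrite de mul0r addr0.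
have dh : d * b + d * g * z = d * (b + (g + e) * z).
  have -> : d * (b + (g + e) * z) = d * b + d * g * z + (d * e) * z by ring.
  by rewrite de mul0r addr0.
rewrite dc dh.
have -> : d * c * - t + d * (b + (g + e) * z) * v = d * (((b + (g + e) * z) * v - 1) - c * t) + d by ring.
by rewrite Ht subrr mulr0 add0r.
Qed.

Lemma main2 (R : comUnitRingType) (LS : locally_stable R) m (a : 'I_(2 + m) -> R) (d : R) (c : 'I_(2+m) -> R) :
  (forall i, exists r, a i = d * r) -> d = \sum_(i < 2 + m) a i * c i ->
  exists A : 'M[R]_(2 + m),
    (forall i0 : 'I_(2 + m), nat_of_ord i0 = 0%N -> forall j, A i0 j = a j) /\ \det A = d.
Proof.
move=> Hdiv hd.
have e1 : lift (ord0 : 'I_2) (ord0 : 'I_1) = 1 by apply: val_inj.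
set al := a (lshift m 0); set be := a (lshift m 1).
set ga := \sum_(k < m) a (rshift 2 k) * c (rshift 2 k).
have hd' : d = al * c (lshift m 0) + be * c (lshift m 1) + ga.
  rewrite hd big_split_ord /= !big_ord_recl big_ord0 addr0.
  by rewrite e1.
have hga : exists g, ga = d * g.
  apply: (big_ind (fun x => exists g, x = d * g)).
  - by exists 0; rewrite mulr0.
  - by move=> x y [gx ->] [gy ->]; exists (gx + gy); rewrite mulrDr.
  - move=> k _; have [r ->] := Hdiv (rshift 2 k); exists (r * c (rshift 2 k)); by rewrite mulrA.
have [p [q [w [r [s Hc]]]]] := core LS (Hdiv _) (Hdiv _) hga hd'.
pose av : 'rV[R]_(2 + m) := \row_j a j.
pose u1 : 'rV[R]_2 := lsubmx av.
pose u2 : 'rV[R]_m := rsubmx av.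
pose E11 : 'M[R]_2 := \matrix_(i, j) (if i == j then 1 else if (i == 1 :> nat) && (j == 0 :> nat) then p else 0).
pose E21 : 'M[R]_(m, 2) := \matrix_(k, j) (c (rshift 2 k) * (if j == 0 :> nat then q else w)).
pose E : 'M[R]_(2 + m) := block_mx E11 0 E21 1%:M.
pose x1 : 'rV[R]_2 := u1 *m E11 + u2 *m E21.
pose X : 'M[R]_2 := \matrix_(i, j) (if i == 0 :> nat then x1 0 j else if j == 0 :> nat then - s else r).
pose Y : 'M[R]_(2, m) := \matrix_(i, j) (if i == 0 :> nat then u2 0 j else 0).
pose A2 : 'M[R]_(2 + m) := block_mx X Y 0 1%:M.
have detE : \det E = 1.
  by rewrite det_lblock det1 mulr1 det2 !mxE /= mulr1 mul0r subr0.
have Eu : E \in unitmx by rewrite unitmxE detE unitr1.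
have ga_e : forall j, (u2 *m E21) 0 j = ga * (if j == 0 :> nat then q else w).
  move=> j; rewrite !mxE /ga big_distrl /=; apply: eq_bigr => k _.
  by rewrite !mxE mulrA.
have x10 : x1 0 0 = al + be * p + ga * q.
  rewrite /x1 [in LHS]mxE ga_e /= !mxE !big_ord_recl big_ord0 !mxE /=. rewrite /al /be e1; ring.
have x11 : x1 0 1 = be + ga * w.
  rewrite /x1 [in LHS]mxE ga_e /= !mxE !big_ord_recl big_ord0 !mxE /=. rewrite /al /be e1; ring.
have detA2 : \det A2 = d.
  rewrite det_ublock det1 mulr1 det2.
  have -> : X 0 0 = x1 0 0 by rewrite mxE.
  have -> : X 0 1 = x1 0 1 by rewrite mxE.
  have -> : X 1 1 = r by rewrite mxE.
  have -> : X 1 0 = - s by rewrite mxE.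
  by rewrite x10 x11 -Hc /al /be; ring.
have row0 : forall i0 : 'I_(2 + m), nat_of_ord i0 = 0%N -> row i0 A2 = av *m E.
  move=> i0 hi0; have -> : i0 = lshift m 0 by apply: val_inj.
  rewrite -[av]hsubmxK mul_row_block mulmx0 mulmx1 add0r.
  apply/rowP => j; rewrite mxE -(splitK j); case: (split j) => j' /=.
    by rewrite block_mxEul row_mxEl mxE.
  by rewrite block_mxEur row_mxEr mxE.
exists (A2 *m invmx E); split.
  move=> i0 hi0 j.
  transitivity (row i0 (A2 *m invmx E) 0 j); first by rewrite [RHS]mxE.
  by rewrite row_mul row0 // mulmxK // mxE.
by rewrite det_mulmx det_inv detE invr1 mulr1.
Qed.

Theorem theorem4p1 (R : comUnitRingType) :
  locally_stable R -> strongly_completable R.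
Proof.
move=> LS n hn a d Hid.
have [c hd] : exists c, d = \sum_(i < n) a i * c i.
  by apply/(Hid d).2; exists 1; rewrite mulr1.
have Hdiv : forall i, exists r, a i = d * r.
  move=> i; apply/(Hid (a i)).1.
  exists (fun k => if k == i then 1 else 0).
  rewrite (bigD1 i) //= eqxx mulr1 big1 ?addr0 // => k /negbTE ->; by rewrite mulr0.
case: n hn a Hid c hd Hdiv => [|[|m]] // hn a Hid c hd Hdiv.
exact: (main2 LS Hdiv hd).
Qed.
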